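(* Let $(M,g)$ be a Riemannian manifold isometrically immersed into a Riemannian manifold $(N,\widetilde g)$ carrying a Riemannian $(a,b)$-complex metallic structure $\widetilde P$, and let $P,Q,R,S$ be defined by $\widetilde PX=PX+QX$ and $\widetilde P\xi=R\xi+S\xi$ (tangent plus normal parts) for $X$ tangent and $\xi$ normal to $M$. Then $M$ is invariant (i.e. $\widetilde P(T_xM)\subset T_xM$ for all $x\in M$) if and only if $P$ is a non-trivial Riemannian $(a,b)$-complex metallic structure on $M$. In particular, invariant submanifolds of Riemannian manifolds with a Riemannian $(a,b)$-complex metallic structure are even-dimensional.
   Context: For $a,b>0$ with $a<2\sqrt b$, an $(a,b)$-complex metallic structure is a $(1,1)$-tensor $J$ with $J^2+aJ+b\,\mathrm{id}=0$; it is Riemannian for a metric $g$ if $g(JX,Y)=-g(X,JY)-a\,g(X,Y)$. *)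

(* Defs.v *)
(* pointwise (fiberwise) linear algebra of the tangent/normal
   decomposition along an isometric immersion. *)
From HB Require Import structures.
From mathcomp Require Import all_boot all_order all_algebra.
Set Implicit Arguments. Unset Strict Implicit. Unset Printing Implicit Defensive.
Import Order.TTheory GRing.Theory Num.Theory.
Local Open Scope ring_scope.

Section Defs.
Variables (R : rcfType) (V : vectType R).

Definition metric_form (g : V -> V -> R) : Prop :=
  [/\ forall (c : R) (u v w : V), g (c *: u + v) w = c * g u w + g v w,
      forall u v, g u v = g v u
    & forall v, v != 0 -> 0 < g v v].

Definition complex_metallic (a b : R) (U : {vspace V}) (J : V -> V) : Prop :=
  (forall X, X \in U -> J X \in U) /\
  (forall X, X \in U -> J (J X) + a *: J X + b *: X = 0).

Definition riemannian_wrt (a : R) (g : V -> V -> R) (U : {vspace V})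
  (J : V -> V) : Prop :=
  forall X Y, X \in U -> Y \in U -> g (J X) Y = - g X (J Y) - a * g X Y.

Definition riemannian_complex_metallic (a b : R) (g : V -> V -> R)
  (U : {vspace V}) (J : V -> V) : Prop :=
  complex_metallic a b U J /\ riemannian_wrt a g U J.

Definition nontrivial_on (U : {vspace V}) (J : V -> V) : Prop :=
  exists2 X, X \in U & J X != 0.

Definition normal_space (g : V -> V -> R) (T N : {vspace V}) : Prop :=
  forall w, w \in N <-> (forall u, u \in T -> g u w = 0).

Definition tangential_part (T N : {vspace V}) (Pt : 'End(V)) : V -> V :=
  fun X => daddv_pi T N (Pt X).

Definition invariant_sub (T : {vspace V}) (Pt : 'End(V)) : Prop :=
  forall X, X \in T -> Pt X \in T.

End Defs.

(* Main.v *)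
Require Import Defs.
From HB Require Import structures.
From mathcomp Require Import all_boot all_order all_algebra.
From mathcomp Require Import ring lra zify.
Import Order.TTheory GRing.Theory Num.Theory.
Import VectorInternalTheory.
Local Open Scope ring_scope.
Set Implicit Arguments. Unset Strict Implicit.

Lemma even_dim_cplx (K : realFieldType) (W : vectType K) (f : 'Hom(W,W)) :
  (forall w, f (f w) = - w) -> ~~ odd (dim W).
Proof.
move=> ff.
set A := f2mx f.
have fE : forall w, f w = r2v (v2r w *m A) by move=> w; rewrite unlock.
have AA : A *m A = - 1%:M.
  apply/row_matrixP => i; rewrite !rowE.
  set u := delta_mx 0 i.
  have := congr1 v2r (ff (r2v u)).
  rewrite !fE !r2vK raddfN /= r2vK => h.
  transitivity (u *m A *m A); first exact: mulmxA.
  by rewrite h mulmxN mulmx1.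
apply/negP => hodd.
have := congr1 determinant AA.
rewrite det_mulmx.
have -> : - (1%:M : 'M[K]_(dim W)) = (-1)%:M by rewrite -scaleN1r scalemx1.
rewrite det_scalar -signr_odd hodd expr1 => h.
have : 0 <= \det A * \det A by rewrite -expr2 sqr_ge0.
by rewrite h ler0N1.
Qed.

Section Ortho.
Variables (R : rcfType) (V : vectType R) (g : V -> V -> R).
Hypothesis hg : metric_form g.

Lemma g0l w : g 0 w = 0.
Proof.
case: hg => lin _ _; have := lin 1 0 0 w; rewrite scaler0 addr0 mul1r.
by move=> h; apply: (addrI (g 0 w)); rewrite -h addr0.
Qed.

Lemma gZl c u w : g (c *: u) w = c * g u w.
Proof. by case: hg => lin _ _; have := lin c u 0 w; rewrite addr0 g0l addr0. Qed.

Lemma gDl u v w : g (u + v) w = g u w + g v w.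
Proof. by case: hg => lin _ _; have := lin 1 u v w; rewrite scale1r mul1r. Qed.

Lemma gsym u v : g u v = g v u.
Proof. by case: hg => _ h _; apply: h. Qed.

Lemma gDr u v w : g w (u + v) = g w u + g w v.
Proof. by rewrite gsym gDl !(gsym w). Qed.

Lemma gZr c u w : g w (c *: u) = c * g w u.
Proof. by rewrite gsym gZl gsym. Qed.

Lemma gNl u w : g (- u) w = - g u w.
Proof. by rewrite -scaleN1r gZl mulN1r. Qed.

Lemma gsuml (I : Type) (r : seq I) (F : I -> V) w :
  g (\sum_(i <- r) F i) w = \sum_(i <- r) g (F i) w.
Proof.
elim: r => [|i r IH]; first by rewrite !big_nil g0l.
by rewrite !big_cons gDl IH.
Qed.

Lemma g_pos v : v != 0 -> 0 < g v v.
Proof. by case: hg => _ _; apply. Qed.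

Lemma g_self0 v : g v v = 0 -> v = 0.
Proof.
move=> h; apply/eqP; apply: contraT => nz.
by have := @g_pos v nz; rewrite h ltxx.
Qed.

Variables (T N : {vspace V}).
Hypothesis hN : normal_space g T N.

Lemma capTN : (T :&: N = 0)%VS.
Proof.
apply/eqP; rewrite -subv0; apply/subvP => w /memv_capP [wT wN].
by rewrite memv0; apply/eqP; apply: g_self0; exact: ((hN w).1 wN w wT).
Qed.

Definition gmap (w : V) : 'rV[R]_(\dim T) := \row_i g (vbasis T)`_i w.

Lemma gmap_lin : linear gmap.
Proof. by move=> c u v; apply/rowP => i; rewrite !mxE gDr gZr. Qed.

HB.instance Definition _ := GRing.isSemilinear.Build R V 'rV[R]_(\dim T) _ gmap
  (GRing.semilinear_linear gmap_lin).

Lemma addTN : (T + N = fullv)%VS.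
Proof.
set F := linfun gmap.
have kerN : (lker F <= N)%VS.
  apply/subvP => w; rewrite memv_ker lfunE /= => /eqP h.
  apply/(hN w).2 => u uT.
  rewrite (coord_vbasis uT) gsuml big1 // => i _.
  rewrite gZl.
  have : gmap w 0 i = 0 by rewrite h mxE.
  by rewrite mxE => ->; rewrite mulr0.
apply/eqP; rewrite eqEdim subvf /=.
rewrite dimv_disjoint_sum ?capTN //.
have hk := limg_ker_dim F fullv.
rewrite capfv in hk.
have h1 : (\dim (limg F) <= \dim T)%N.
  by have := dimvS (subvf (limg F)); rewrite dimvf /dim /= mul1n.
have h2 := dimvS kerN.
rewrite -hk; lia.
Qed.

End Ortho.
Section Main.
Variables (R : rcfType) (V : vectType R) (g : V -> V -> R).
Hypothesis hg : metric_form g.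
Variables (a b : R) (ha : 0 < a) (hb : 0 < b) (Pt : 'End(V)).
Hypothesis hP : riemannian_complex_metallic a b g fullv Pt.
Variables (T N : {vspace V}).
Hypothesis hN : normal_space g T N.

Let hmet X : Pt (Pt X) + a *: Pt X + b *: X = 0.
Proof. by case: hP => [[_ h] _]; apply: h; rewrite memvf. Qed.

Let hriem X Y : g (Pt X) Y = - g X (Pt Y) - a * g X Y.
Proof. by case: hP => [_ h]; apply: h; rewrite memvf. Qed.

Lemma forward : (0 < \dim T)%N -> invariant_sub T Pt ->
  riemannian_complex_metallic a b g T (tangential_part T N Pt)
  /\ nontrivial_on T (tangential_part T N Pt).
Proof.
move=> dT inv.
have PE X : X \in T -> tangential_part T N Pt X = Pt X.
  by move=> XT; rewrite /tangential_part daddv_pi_id ?(capTN hg hN) ?inv.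
split; first split; first split.
- by move=> X _; exact: memv_pi.
- by move=> X XT; rewrite !PE ?inv //; exact: hmet.
- by move=> X Y XT YT; rewrite !PE //; exact: hriem.
exists (vpick T); first exact: memv_pick.
rewrite PE ?memv_pick //; apply/eqP => h0.
have := hmet (vpick T); rewrite h0 linear0 scaler0 !add0r => /eqP.
rewrite scaler_eq0 (gt_eqF hb) /= vpick0 -dimv_eq0 => /eqP; lia.
Qed.

Lemma backward : complex_metallic a b T (tangential_part T N Pt) ->
  invariant_sub T Pt.
Proof.
move=> [_ hm] X XT.
have capz := capTN hg hN.
have dec v : daddv_pi T N v + daddv_pi N T v = v.
  by apply: daddv_pi_add; rewrite ?capz ?(addTN hg hN) ?memvf.
set q := daddv_pi N T (Pt X).
have qN : q \in N by exact: memv_pi.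
have hq : daddv_pi T N (Pt X) + q = Pt X := dec _.
have e2 : daddv_pi T N (Pt (Pt X) + a *: Pt X + b *: X) = 0 by rewrite hmet linear0.
rewrite !linearD !linearZ /= -{1}hq linearD /= (daddv_pi_id capz XT) in e2.
have e3 := hm X XT; rewrite /tangential_part in e3.
have hPq : daddv_pi T N (Pt q) = 0.
  rewrite -!addrA in e2 e3.
  rewrite linearD -!addrA in e2.
  by rewrite [daddv_pi T N (Pt q) + _]addrC addrA e3 add0r in e2.
have PqN : Pt q \in N by rewrite -(dec (Pt q)) hPq add0r; exact: memv_pi.
have PXT : daddv_pi T N (Pt X) \in T by exact: memv_pi.
have h1 : g (Pt q) X = 0 by rewrite gsym //; exact: ((hN _).1 PqN X XT).
have h2 : g q X = 0 by rewrite gsym //; exact: ((hN _).1 qN X XT).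
have h3 : g q (daddv_pi T N (Pt X)) = 0.
  by rewrite gsym //; exact: ((hN _).1 qN _ PXT).
have := hriem q X; rewrite h1 h2 mulr0 subr0 -hq gDr // h3 add0r.
move/eqP; rewrite eq_sym oppr_eq0 => /eqP hqq.
by rewrite (g_self0 hg hqq) addr0.
Qed.

Lemma parity : a < 2 * Num.sqrt b -> invariant_sub T Pt -> ~~ odd (\dim T).
Proof.
move=> hab inv.
set s := Num.sqrt b.
have s2 : s ^+ 2 = b by rewrite sqr_sqrtr // ltW.
have s0 : 0 <= s := sqrtr_ge0 b.
have d0 : 0 < 4 * b - a ^+ 2.
  have h1 : 0 < 2 * s - a by rewrite subr_gt0.
  have h2 : 0 < 2 * s + a by apply: ltr_wpDl => //; rewrite mulr_ge0.
  rewrite -s2 (_ : 4 * s ^+ 2 - a ^+ 2 = (2 * s - a) * (2 * s + a)); last by ring.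
  exact: mulr_gt0.
set c := Num.sqrt (4 * b - a ^+ 2).
have c2 : c ^+ 2 = 4 * b - a ^+ 2 by rewrite sqr_sqrtr // ltW.
have c0 : c != 0 by rewrite gt_eqF // sqrtr_gt0.
have hb' : b = (c ^+ 2 + a ^+ 2) / 4 by rewrite c2; field.
pose J : 'End(V) := c^-1 *: (2 *: Pt + a *: \1%VF).
have JE v : J v = c^-1 *: (2 *: Pt v + a *: v).
  by rewrite /J scale_lfunE add_lfunE !scale_lfunE id_lfunE.
have JT v : v \in T -> J v \in T.
  by move=> vT; rewrite JE rpredZ // rpredD // rpredZ // inv.
have JJ v : J (J v) = - v.
  pose w := Pt v.
  pose K x y := x *: w + y *: v.
  have kE x1 y1 x2 y2 : x1 = x2 -> y1 = y2 -> K x1 y1 = K x2 y2 by move=> -> ->.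
  have kD x1 y1 x2 y2 : K x1 y1 + K x2 y2 = K (x1 + x2) (y1 + y2).
    by rewrite /K addrACA -!scalerDl.
  have kZ k x y : k *: K x y = K (k * x) (k * y) by rewrite /K scalerDr !scalerA.
  have hw : Pt w = K (- a) (- b).
    rewrite /K !scaleNr; apply/eqP; rewrite -opprD -addr_eq0 addrA; exact/eqP/hmet.
  have kP x y : Pt (K x y) = K (- (a * x) + y) (- (b * x)).
    rewrite {1}/K linearD !linearZ /= hw kZ.
    have -> : y *: Pt v = K y 0 by rewrite /K scale0r addr0.
    by rewrite kD; apply: kE; ring.
  have kJ x y : J (K x y) = K (c^-1 * (2 * (- (a * x) + y) + a * x))
                              (c^-1 * (2 * (- (b * x)) + a * y)).
    by rewrite JE kP !kZ kD kZ.
  have -> : v = K 0 1 by rewrite /K scale0r add0r scale1r.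
  rewrite !kJ -scaleN1r kZ; apply: kE; rewrite hb'; field; exact: c0.
pose f : 'End(subvs_of T) := (linfun (vsproj T) \o J \o linfun vsval)%VF.
have fE u : vsval (f u) = J (vsval u).
  rewrite !comp_lfunE [linfun vsval _]lfunE [linfun (vsproj T) _]lfunE.
  exact: (vsprojK (JT _ (subvsP u))).
apply: (@even_dim_cplx _ _ f) => u.
by apply: subvs_inj; rewrite fE fE JJ raddfN.
Qed.

End Main.

Unset Implicit Arguments. Set Strict Implicit.

Theorem proposition4p4 (R : rcfType) (V : vectType R) (Mpt : Type) (x0 : Mpt)
  (m : nat) (a b : R) (g : Mpt -> V -> V -> R) (Pt : Mpt -> 'End(V))
  (TM NM : Mpt -> {vspace V}) :
  0 < a -> 0 < b -> a < 2 * Num.sqrt b ->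
  (forall x, metric_form (g x)) ->
  (forall x, riemannian_complex_metallic a b (g x) fullv (Pt x)) ->
  (forall x, \dim (TM x) = m) -> (0 < m)%N ->
  (forall x, normal_space (g x) (TM x) (NM x)) ->
  ((forall x, invariant_sub (TM x) (Pt x)) <->
   (forall x, riemannian_complex_metallic a b (g x) (TM x)
                (tangential_part (TM x) (NM x) (Pt x))
              /\ nontrivial_on (TM x) (tangential_part (TM x) (NM x) (Pt x))))
  /\ ((forall x, invariant_sub (TM x) (Pt x)) -> ~~ odd m).
Proof.
move=> ha hb hab hg hP hdim hm hN.
split; first split.
- move=> inv x; apply: (forward (hg x) ha hb (hP x) (hN x)); last exact: inv.
  by rewrite hdim.
- move=> H x; apply: (backward (hg x) (hP x) (hN x)).
  by case: (H x) => [[]].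
- move=> inv; rewrite -(hdim x0).
  exact: (parity ha hb (hP x0) hab (inv x0)).
Qed.
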